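(* Let $(X,d_X)$ be a compact geodesic metric space, $r\in X$, $d=d_X(r,\cdot)$, and let $(G,d_G)$ be either the metric Reeb graph of $d$ or the metric $\alpha$-Reeb graph of $d$ (for some $\alpha>0$ and some covering $\mathcal I$), assumed to be a finite graph, with induced function $d_*:G\to\mathbb R_+$. If $\delta$ is a path in $G$ joining two points $p,p'\in G$ such that $d_*\circ\delta$ is strictly increasing, then $\delta$ is a shortest path between $p$ and $p'$ and $d_G(p,p')=d_*(p')-d_*(p)$.
   Context: Reeb graph: for $x,y\in X$ set $x\sim y$ iff $d(x)=d(y)$ and $x,y$ lie in the same path-connected component of $d^{-1}(d(x))$; $G=X/\sim$, with quotient map $\pi:X\to G$. $\alpha$-Reeb graph: given $\alpha>0$ and a covering $\mathcal I=\{I_i\}$ of the range of $d$ by open intervals of length at most $\alpha$, let $\sim_\alpha$ be the transitive closure of the relation ''$d(x)=d(y)$ and $x,y$ lie in the same path-connected component of $d^{-1}(I_i)$ for some $i$''; $G=X/\sim_\alpha$ with quotient map $\pi$. In both cases $d$ induces $d_*:G\to\mathbb R_+$ with $d=d_*\circ\pi$. Metric structure (assuming $G$ is a finite topological graph): the vertex set $V$ consists of the points of degree $\neq 2$, the local maxima of $d_*$, and $\pi(r)$; the edges are the connected components of $G\setminus V$. Each edge, homeomorphic to an interval, is given length equal to the absolute difference of $d_*$ at its endpoints, the distance between two points $p,p'$ of the same edge being $|d_*(p)-d_*(p')|$; $d_G$ is the resulting metric-graph (shortest path) metric on $G$. *)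

(* Defs.v *)
From HB Require Import structures.
From mathcomp Require Import all_boot all_order all_algebra.
From mathcomp Require Import all_classical all_reals all_analysis.
From Stdlib Require Import Relations.
Set Implicit Arguments. Unset Strict Implicit. Unset Printing Implicit Defensive.
Import Order.TTheory GRing.Theory Num.Theory.
Import numFieldNormedType.Exports.
Local Open Scope classical_set_scope.
Local Open Scope ring_scope.

Record fin_graph (R : realType) (G : topologicalType) := FinGraph {
  fg_V : set G;
  fg_E : finType;
  fg_phi : fg_E -> R -> G }.
Arguments fg_V {R G} _ _.
Arguments fg_E {R G} _.
Arguments fg_phi {R G} _ _ _.

Section ReebDefs.
Context {R : realType}.

Definition geodesic_space (X : metricType R) : Prop :=
  forall x y : X, exists g : R -> X,
    g 0 = x /\ g (mdist x y) = y /\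
    forall s t : R, 0 <= s <= mdist x y -> 0 <= t <= mdist x y ->
      mdist (g s) (g t) = `|s - t|.

Definition same_path_comp {T : topologicalType} (A : set T) (x y : T) : Prop :=
  exists g : R -> T, {within `[0, 1], continuous g} /\ g 0 = x /\ g 1 = y /\
    forall t : R, 0 <= t <= 1 -> A (g t).

Definition reeb_rel {T : topologicalType} (d : T -> R) (x y : T) : Prop :=
  d x = d y /\ same_path_comp (d @^-1` [set d x]) x y.

Definition alpha_cover {T : Type} (d : T -> R) (alpha : R) (I : Type)
    (a b : I -> R) : Prop :=
  (forall i, a i < b i /\ b i - a i <= alpha) /\
  (forall x, exists i, a i < d x < b i).

Definition alpha_step {T : topologicalType} (d : T -> R) (I : Type)
    (a b : I -> R) (x y : T) : Prop :=
  d x = d y /\ exists i, same_path_comp (d @^-1` `]a i, b i[) x y.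

Definition alpha_reeb_rel {T : topologicalType} (d : T -> R) (I : Type)
    (a b : I -> R) : T -> T -> Prop :=
  clos_trans T (alpha_step d a b).

(* G with pi : X -> G is (up to homeomorphism) the quotient X / rel:
   pi is onto, identifies exactly rel-related points, and G carries the
   quotient topology. *)
Definition is_quotient {T G : topologicalType} (rel : T -> T -> Prop)
    (pi : T -> G) : Prop :=
  (forall q : G, exists x, pi x = q) /\
  (forall x y, pi x = pi y <-> rel x y) /\
  (forall U : set G, open U <-> open (pi @^-1` U)).

(* A finite (1-dimensional CW) graph structure on a Hausdorff space G:
   a finite set of vertices V0 and finitely many edges, each given by a
   continuous map [0,1] -> G, injective on ]0,1[, sending the endpoints
   into V0, with open edges pairwise disjoint and disjoint from V0, and
   covering G together with V0. *)

Definition is_fin_graph (G : topologicalType) (S : fin_graph R G) : Prop :=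
  hausdorff_space G /\
  finite_set (fg_V S) /\
  (forall e, {within `[0, 1], continuous (fg_phi S e)}) /\
  (forall e, fg_V S (fg_phi S e 0) /\ fg_V S (fg_phi S e 1)) /\
  (forall e s t, 0 < s < 1 -> 0 < t < 1 ->
       fg_phi S e s = fg_phi S e t -> s = t) /\
  (forall e s, 0 < s < 1 -> ~ fg_V S (fg_phi S e s)) /\
  (forall e e' s t, 0 < s < 1 -> 0 < t < 1 ->
       fg_phi S e s = fg_phi S e' t -> e = e') /\
  (forall p, fg_V S p \/ exists e s, 0 < s < 1 /\ fg_phi S e s = p).

Definition on_open_edge (G : topologicalType) (S : fin_graph R G) (p : G) : Prop :=
  exists e s, 0 < s < 1 /\ fg_phi S e s = p.

Definition graph_degree (G : topologicalType) (S : fin_graph R G) (p : G) : nat :=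
  (#|[set eb : (fg_E S * bool)%type |
        fg_phi S eb.1 (if eb.2 then 1%R else 0%R) == p]|
   + (if `[< on_open_edge S p >] then 2 else 0))%N.

Definition local_max {G : topologicalType} (f : G -> R) (p : G) : Prop :=
  exists U, nbhs p U /\ forall q, U q -> f q <= f p.

Definition reeb_vertices (G : topologicalType) (S : fin_graph R G)
    (dstar : G -> R) (pr : G) : set G :=
  [set p | graph_degree S p <> 2%N] `|` [set p | local_max dstar p] `|` [set pr].

Definition same_edge (G : topologicalType) (V : set G) (a b : G) : Prop :=
  exists x, ~ V x /\ closure (connected_component (~` V) x) a /\
                     closure (connected_component (~` V) x) b.

Fixpoint is_chain {G : Type} (adj : G -> G -> Prop) (x : G) (s : seq G) : Prop :=
  match s with
  | [::] => True
  | y :: s' => adj x y /\ is_chain adj y s'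
  end.

Fixpoint chain_length {G : Type} (dstar : G -> R) (x : G) (s : seq G) : R :=
  match s with
  | [::] => 0
  | y :: s' => `|dstar x - dstar y| + chain_length dstar y s'
  end.

(* shortest-path metric of the metric graph: infimum over chains
   p = x0, x1, ..., xn = q with consecutive points on a common edge,
   of the sum of the edge distances |d_*(x_i) - d_*(x_{i+1})|
   (+oo if there is no such chain) *)
Definition graph_dist (G : topologicalType) (S : fin_graph R G)
    (dstar : G -> R) (pr : G) (p q : G) : \bar R :=
  ereal_inf [set (chain_length dstar p s)%:E | s in
     [set s | is_chain (same_edge (reeb_vertices S dstar pr)) p s /\
              last p s = q]].

Fixpoint partition_sum {G : Type} (dist : G -> G -> \bar R) (delta : R -> G)
    (t0 : R) (ts : seq R) : \bar R :=
  match ts with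
  | [::] => 0%E
  | t :: ts' => (dist (delta t0) (delta t) + partition_sum dist delta t ts')%E
  end.

Definition path_length {G : Type} (dist : G -> G -> \bar R) (delta : R -> G)
    : \bar R :=
  ereal_sup [set partition_sum dist delta 0 ts | ts in
     [set ts : seq R | path <%R 0 ts /\ last 0 ts = 1]].

End ReebDefs.

(* Main.v *)
Require Import Defs.
From HB Require Import structures.
From mathcomp Require Import all_boot all_order all_algebra.
From mathcomp Require Import all_classical all_reals all_analysis.
From mathcomp Require Import ring lra.
Import Order.TTheory GRing.Theory Num.Theory.
Import numFieldNormedType.Exports.
Local Open Scope classical_set_scope.
Local Open Scope ring_scope.

Lemma right_pt (R : realType) (G : topologicalType) (delta : R -> G) s t (B : set G) :
  {within `[0, 1], continuous delta} -> 0 <= s -> s < t -> t <= 1 ->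
  nbhs (delta s) B -> exists u, s < u < t /\ B (delta u).
Proof.
move=> dc s0 st t1 Bn.
have s01 : `[0, 1]%classic s by rewrite /= in_itv /= s0 /=; lra.
have := dc s _ Bn; rewrite /= /nbhs /= -(nbhs_subspace_in s01) /within /=.
move=> /nbhs_ballP [e /= e0 He].
pose m := Num.min e (t - s).
have m0 : 0 < m by rewrite lt_min e0 subr_gt0.
have me : m <= e by rewrite ge_min lexx.
have mt : m <= t - s by rewrite ge_min lexx orbT.
exists (s + m / 2); split; first (apply/andP; split; lra).
apply: He; last by rewrite /= in_itv /=; apply/andP; split; lra.
rewrite /ball /= opprD addrA subrr add0r normrN ger0_norm; lra.
Qed.
Arguments right_pt {R G delta s t B}.

Lemma left_pt (R : realType) (G : topologicalType) (delta : R -> G) s t (B : set G) :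
  {within `[0, 1], continuous delta} -> 0 <= s -> s < t -> t <= 1 ->
  nbhs (delta t) B -> exists u, s < u < t /\ B (delta u).
Proof.
move=> dc s0 st t1 Bn.
have t01 : `[0, 1]%classic t by rewrite /= in_itv /= t1 andbT; lra.
have := dc t _ Bn; rewrite /= /nbhs /= -(nbhs_subspace_in t01) /within /=.
move=> /nbhs_ballP [e /= e0 He].
pose m := Num.min e (t - s).
have m0 : 0 < m by rewrite lt_min e0 subr_gt0.
have me : m <= e by rewrite ge_min lexx.
have mt : m <= t - s by rewrite ge_min lexx orbT.
exists (t - m / 2); split; first (apply/andP; split; lra).
apply: He; last by rewrite /= in_itv /=; apply/andP; split; lra.
rewrite /ball /=; have -> : t - (t - m / 2) = m / 2 by ring.
rewrite ger0_norm; lra.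
Qed.
Arguments left_pt {R G delta s t B}.

Lemma chain_cat (G : Type) (adj : G -> G -> Prop) x s1 s2 :
  is_chain adj x (s1 ++ s2) <-> is_chain adj x s1 /\ is_chain adj (last x s1) s2.
Proof.
elim: s1 x => [|y s1 IH] x /=; first by split => // -[].
rewrite IH; split; [move=> [? [? ?]]; by [] | move=> [[? ?] ?]; by []].
Qed.

Lemma chain_length_cat (R : realType) (G : Type) (ds : G -> R) x s1 s2 :
  chain_length ds x (s1 ++ s2) = chain_length ds x s1 + chain_length ds (last x s1) s2.
Proof. by elim: s1 x => [|y s1 IH] x /=; rewrite ?add0r // IH addrA. Qed.

Lemma chain_lb (R : realType) (G : Type) (ds : G -> R) x s :
  `|ds x - ds (last x s)| <= chain_length ds x s.
Proof.
elim: s x => [|y s IH] x /=; first by rewrite subrr normr0.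
apply: le_trans (lerD (lexx _) (IH y)).
have -> : ds x - ds (last y s) = (ds x - ds y) + (ds y - ds (last y s)) by ring.
exact: ler_normD.
Qed.

Lemma vertex_char (R : realType) (G : topologicalType) (S : fin_graph R G)
  (ds : G -> R) (pr q : G) :
  is_fin_graph S -> reeb_vertices S ds pr q -> ~ local_max ds q ->
  fg_V S q \/ q = pr.
Proof.
move=> [_ [_ [_ [Hend [_ [Hint [_ Hcov]]]]]]].
case=> [[Hdeg|Hlm]|->] Hnlm; [|by []|by right].
left; apply: contrapT => Nq.
have [//|[e [s [s01 es]]]] := Hcov q.
apply: Hdeg; rewrite /graph_degree.
have -> : `[< on_open_edge S q >] = true by apply/asboolP; exists e, s.
suff -> : #|[set eb : (fg_E S * bool)%type |
        fg_phi S eb.1 (if eb.2 then 1%R else 0%R) == q]| = 0%N by [].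
apply: eq_card0 => -[e' b].
rewrite /in_mem /=.
apply/negbTE/asboolPn => /= /eqP E; apply: Nq; rewrite -E.
by case: b {E}; case: (Hend e').
Qed.
Arguments vertex_char {R G S ds pr q}.

Lemma base_edge (R : realType) (G : topologicalType) (V : set G) (delta : R -> G) s t :
  {within `[0, 1], continuous delta} -> 0 <= s -> s < t -> t <= 1 ->
  (forall u, s < u < t -> ~ V (delta u)) -> same_edge V (delta s) (delta t).
Proof.
move=> dc s0 st t1 NV.
have mst : s < (s + t) / 2 < t by apply/andP; split; lra.
exists (delta ((s + t) / 2)); split; first exact: NV.
pose C := delta @` [set` `]s, t[].
have CC : C `<=` connected_component (~` V) (delta ((s + t) / 2)).
  apply: connected_component_max.
  - by exists ((s + t) / 2) => //=; rewrite in_itv.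
  - by move=> _ [u /= + <-]; rewrite in_itv /= => /NV.
  - apply: connected_continuous_connected.
      by apply/connected_intervalP; exact: interval_is_interval.
    apply: continuous_subspaceW dc => u /=; rewrite !in_itv /= => /andP[? ?].
    apply/andP; split; lra.
split; apply: (closureS CC) => B /= Bn.
- have [u [su uB]] := right_pt dc s0 st t1 Bn.
  by exists (delta u); split => //; exists u => //=; rewrite in_itv.
- have [u [su uB]] := left_pt dc s0 st t1 Bn.
  by exists (delta u); split => //; exists u => //=; rewrite in_itv.
Qed.

Lemma path_le_last (R : realType) (x : R) s : path <%R x s -> x <= last x s.
Proof.
elim: s x => [|y s IH] x /=; first by [].
by move=> /andP[xy /IH]; apply: le_trans; exact: ltW.
Qed.

Section Main.
Context (R : realType) (G : topologicalType) (S : fin_graph R G) (ds : G -> R)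
  (pr : G) (delta : R -> G).
Hypothesis hfg : is_fin_graph S.
Hypothesis dc : {within `[0, 1], continuous delta}.
Hypothesis mono : forall s t : R, 0 <= s -> s < t -> t <= 1 ->
       ds (delta s) < ds (delta t).

Let V := reeb_vertices S ds pr.

Lemma Vin u : 0 <= u -> u < 1 -> V (delta u) -> fg_V S (delta u) \/ delta u = pr.
Proof.
move=> u0 u1 Vu; apply: (vertex_char hfg Vu) => -[U [Un Hle]].
have [w [/andP[uw w1] Uw]] := right_pt dc u0 u1 (lexx _) Un.
have := Hle _ Uw; have := mono _ _ u0 uw (ltW w1).
by move=> /lt_le_trans H /H; rewrite ltxx.
Qed.

Lemma inj a b : 0 <= a -> a < b -> b <= 1 -> delta a <> delta b.
Proof. by move=> a0 ab b1 E; have := mono _ _ a0 ab b1; rewrite E ltxx. Qed.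

Lemma chain_ex (l : seq G) : forall s t, 0 <= s -> s < t -> t <= 1 ->
  (forall u, s < u < t -> V (delta u) -> delta u \in l) ->
  exists c, is_chain (same_edge V) (delta s) c /\ last (delta s) c = delta t /\
    chain_length ds (delta s) c = ds (delta t) - ds (delta s).
Proof.
elim: l => [|y l IH] s t s0 st t1 H.
  exists [:: delta t]; split; [split => //|split => //=].
    by apply: base_edge => // u hu hV; have := H u hu hV.
  by rewrite addr0 ltr0_norm ?subr_lt0 ?mono // opprB.
case: (pselect (exists u, s < u < t /\ V (delta u) /\ delta u = y)).
  move=> [u [/andP[su ut] [hV hy]]].
  have u0 : 0 <= u by apply: (le_trans s0); exact: ltW.
  have u1 : u <= 1 by apply: (le_trans _ t1); exact: ltW.
  have [c1 [h1 [l1 e1]]] : exists c, is_chain (same_edge V) (delta s) c /\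
      last (delta s) c = delta u /\
      chain_length ds (delta s) c = ds (delta u) - ds (delta s).
    apply: IH => // w /andP[sw wu] hw.
    have := H w ltac:(apply/andP; split => //; exact: lt_trans ut) hw.
    rewrite in_cons => /orP[/eqP E|//]; exfalso.
    apply: (@inj w u) => //; [exact: le_trans s0 (ltW sw)|by rewrite E].
  have [c2 [h2 [l2 e2]]] : exists c, is_chain (same_edge V) (delta u) c /\
      last (delta u) c = delta t /\
      chain_length ds (delta u) c = ds (delta t) - ds (delta u).
    apply: IH => // w /andP[uw wt] hw.
    have := H w ltac:(apply/andP; split => //; exact: lt_trans uw) hw.
    rewrite in_cons => /orP[/eqP E|//]; exfalso.
    apply: (@inj u w) => //; [exact: le_trans (ltW wt) t1|by rewrite E].
  exists (c1 ++ c2); split; first by apply/chain_cat; rewrite l1.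
  split; first by rewrite last_cat l1.
  rewrite chain_length_cat l1 e1 e2; ring.
move=> Nex; apply: IH => // u hu hV.
have := H u hu hV; rewrite in_cons => /orP[/eqP E|//]; exfalso.
by apply: Nex; exists u.
Qed.

Lemma key s t : 0 <= s -> s < t -> t <= 1 ->
  graph_dist S ds pr (delta s) (delta t) = (ds (delta t) - ds (delta s))%:E.
Proof.
move=> s0 st t1.
have [_ [finV _]] := hfg.
have [lV hlV] := (finite_seqP (fg_V S)).1 finV.
have [c [hc [hl he]]] := @chain_ex (pr :: lV) s t s0 st t1
  ltac:(move=> u /andP[su ut] hV;
        have [|] := Vin u (le_trans s0 (ltW su)) (lt_le_trans ut t1) hV;
        [rewrite hlV /= in_cons => ->; exact: orbT | move=> ->; exact: mem_head]).
apply/le_anti/andP; split.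
  apply: ge_ereal_inf; exists (chain_length ds (delta s) c)%:E; last by rewrite he.
  by exists c.
apply: le_ereal_inf_tmp => _ [c' [hc' hl'] <-].
rewrite lee_fin; have := @chain_lb _ _ ds (delta s) c'; rewrite hl' => H.
apply: le_trans H; rewrite distrC; exact: ler_norm.
Qed.

Lemma psum ts : forall t0, 0 <= t0 -> path <%R t0 ts -> last t0 ts = 1 ->
  partition_sum (graph_dist S ds pr) delta t0 ts = (ds (delta 1) - ds (delta t0))%:E.
Proof.
elim: ts => [|t ts IH] t0 h0 /=; first by move=> _ ->; rewrite subrr.
move=> /andP[t0t hp] hl.
have t1 : t <= 1 by rewrite -hl; exact: path_le_last.
rewrite key // IH //; last exact: le_trans h0 (ltW t0t).
by rewrite -EFinD; congr (_%:E); ring.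
Qed.

End Main.

Theorem lemma1 (R : realType) (X : metricType R) (r : X)
  (G : topologicalType) (pi : X -> G) (dstar : G -> R) (S : fin_graph R G) :
  compact [set: X] ->
  geodesic_space X ->
  (is_quotient (reeb_rel (fun x => mdist r x)) pi \/
   exists (alpha : R) (I : Type) (a b : I -> R),
     0 < alpha /\ alpha_cover (fun x => mdist r x) alpha a b /\
     is_quotient (alpha_reeb_rel (fun x => mdist r x) a b) pi) ->
  (forall x : X, mdist r x = dstar (pi x)) ->
  is_fin_graph S ->
  forall (delta : R -> G) (p p' : G),
    {within `[0, 1], continuous delta} ->
    delta 0 = p -> delta 1 = p' ->
    (forall s t : R, 0 <= s -> s < t -> t <= 1 ->
       dstar (delta s) < dstar (delta t)) ->
    path_length (graph_dist S dstar (pi r)) delta = graph_dist S dstar (pi r) p p'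
    /\ graph_dist S dstar (pi r) p p' = (dstar p' - dstar p)%:E.
Proof.
move=> _ _ _ _ hfg delta p p' dc d0 d1 mono.
have K := @key R G S dstar (pi r) delta hfg dc mono.
have P := @psum R G S dstar (pi r) delta hfg dc mono.
have E : graph_dist S dstar (pi r) p p' = (dstar p' - dstar p)%:E.
  by rewrite -d0 -d1; apply: K => //; lra.
split => //; rewrite E /path_length.
have -> : [set partition_sum (graph_dist S dstar (pi r)) delta 0 ts | ts in
     [set ts : seq R | path <%R 0 ts /\ last 0 ts = 1]] = [set (dstar p' - dstar p)%:E].
  apply/seteqP; split => y.
    by move=> [ts [hp hl] <-] /=; rewrite P // -d0 -d1.
  move=> /= ->; exists [:: 1]; first by split => //=; rewrite ltr01.
  by rewrite P //= ?ltr01 // -d0 -d1.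
exact: ereal_sup1.
Qed.
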